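(* Let $a,b,c\in\mathbb{C}$ with $a\neq0$, $c\neq0$, $\Re(b)>0$, $\Re(b+a+c)>0$, $\Re(b+a-c)>0$, $\Re(b-a+c)>0$, $\Re(b-a-c)>0$, and $\frac{a+c}{b},\frac{a-c}{b}\notin\{\pm1,\pm3,\pm5,\dots\}$. Put $\tau_1=\frac12-\frac{a+c}{2b}$, $\tau_2=\frac12-\frac{a-c}{2b}$, $\tau_3=\frac12+\frac{a+c}{2b}$, $\tau_4=\frac12+\frac{a-c}{2b}$, assume $1+\tau_j\notin\mathbb{Z}_0^-$ ($j=1,\dots,4$), and let $Q=(b-a-c)(b+a+c)(b-a+c)(b+a-c)$. Then $$ {}_6F_5\!\left(\begin{matrix}1,\ \frac32,\ \tau_1,\ \tau_2,\ \tau_3,\ \tau_4\\ \frac12,\ 1+\tau_1,\ 1+\tau_2,\ 1+\tau_3,\ 1+\tau_4\end{matrix};\,-1\right) =\frac{\pi Q}{4\,a\,c\,b^{2}}\cdot\frac{\sin\!\big(\frac{a\pi}{2b}\big)\sin\!\big(\frac{c\pi}{2b}\big)}{\cos\!\big(\frac{c\pi}{b}\big)+\cos\!\big(\frac{a\pi}{b}\big)}. $$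
   Context: $\mathbb{Z}_0^-=\{0,-1,-2,\dots\}$. The Pochhammer symbol is $(\lambda)_0=1$, $(\lambda)_n=\lambda(\lambda+1)\cdots(\lambda+n-1)$ for $n\ge1$. The generalized hypergeometric series is ${}_pF_q\!\left(\begin{matrix}\alpha_1,\dots,\alpha_p\\ \beta_1,\dots,\beta_q\end{matrix};z\right)=\sum_{n=0}^\infty\frac{(\alpha_1)_n\cdots(\alpha_p)_n}{(\beta_1)_n\cdots(\beta_q)_n}\frac{z^n}{n!}$ (with no $\beta_j\in\mathbb{Z}_0^-$). *)

(* Defs.v *)
From Stdlib Require Import Reals List Factorial.
Open Scope R_scope.

Record Cplx : Type := mkC { Re : R ; Im : R }.

Definition RtoC (x : R) : Cplx := mkC x 0.
Definition Cadd (z w : Cplx) : Cplx := mkC (Re z + Re w) (Im z + Im w).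
Definition Copp (z : Cplx) : Cplx := mkC (- Re z) (- Im z).
Definition Csub (z w : Cplx) : Cplx := Cadd z (Copp w).
Definition Cmul (z w : Cplx) : Cplx :=
  mkC (Re z * Re w - Im z * Im w) (Re z * Im w + Im z * Re w).
Definition Cinv (z : Cplx) : Cplx :=
  mkC (Re z / (Re z ^ 2 + Im z ^ 2)) (- Im z / (Re z ^ 2 + Im z ^ 2)).
Definition Cdiv (z w : Cplx) : Cplx := Cmul z (Cinv w).
Definition Cnorm (z : Cplx) : R := sqrt (Re z ^ 2 + Im z ^ 2).

Fixpoint Cpow (z : Cplx) (n : nat) : Cplx :=
  match n with O => RtoC 1 | S k => Cmul (Cpow z k) z end.

Definition Rcosh (y : R) : R := (exp y + exp (- y)) / 2.
Definition Rsinh (y : R) : R := (exp y - exp (- y)) / 2.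
Definition Csin (z : Cplx) : Cplx :=
  mkC (sin (Re z) * Rcosh (Im z)) (cos (Re z) * Rsinh (Im z)).
Definition Ccos (z : Cplx) : Cplx :=
  mkC (cos (Re z) * Rcosh (Im z)) (- (sin (Re z) * Rsinh (Im z))).

Fixpoint poch (x : Cplx) (n : nat) : Cplx :=
  match n with
  | O => RtoC 1
  | S k => Cmul (poch x k) (Cadd x (RtoC (INR k)))
  end.

Definition Cprod (l : list Cplx) : Cplx := fold_right Cmul (RtoC 1) l.

Definition hyp_term (alphas betas : list Cplx) (z : Cplx) (n : nat) : Cplx :=
  Cdiv (Cmul (Cprod (map (fun a => poch a n) alphas)) (Cpow z n))
       (Cmul (Cprod (map (fun b => poch b n) betas)) (RtoC (INR (fact n)))).

Fixpoint Cpartial (f : nat -> Cplx) (n : nat) : Cplx :=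
  match n with
  | O => f O
  | S k => Cadd (Cpartial f k) (f (S k))
  end.

Definition Csums (f : nat -> Cplx) (l : Cplx) : Prop :=
  forall eps : R, eps > 0 ->
    exists N : nat, forall n : nat, (n >= N)%nat -> Cnorm (Csub (Cpartial f n) l) < eps.

Definition pFq_eq (alphas betas : list Cplx) (z l : Cplx) : Prop :=
  Csums (hyp_term alphas betas z) l.

Definition not_odd_int (z : Cplx) : Prop :=
  forall k : nat, z <> RtoC (INR (2 * k + 1)) /\ z <> RtoC (- INR (2 * k + 1)).

Definition not_nonpos_int (z : Cplx) : Prop :=
  forall k : nat, z <> RtoC (- INR k).

(* Main.v *)
Require Import Defs.
From Stdlib Require Import Reals List Lra Field Lia ZArith.
From Coquelicot Require Import Rcomplements Hierarchy Derive AutoDerive Series Lim_seq.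
Open Scope R_scope.

Lemma Ceq (z w : Cplx) : Re z = Re w -> Im z = Im w -> z = w.
Proof. destruct z, w; simpl; intros; subst; reflexivity. Qed.

Definition C0 := RtoC 0.
Definition C1 := RtoC 1.

Lemma Cring : ring_theory (RtoC 0) (RtoC 1) Cadd Cmul Csub Copp (@eq Cplx).
Proof.
  constructor; intros; apply Ceq; simpl; ring.
Qed.

Lemma Cfield : field_theory (RtoC 0) (RtoC 1) Cadd Cmul Csub Copp Cdiv Cinv (@eq Cplx).
Proof.
  constructor.
  - exact Cring.
  - intro H. injection H. lra.
  - reflexivity.
  - intros [x y] H. apply Ceq; simpl.
    + assert (x^2+y^2 <> 0).
      { intro H0. apply H. assert (x = 0) by nra. assert (y = 0) by nra. subst. reflexivity. }
      field; replace (x*x+y*y) with (x^2+y^2) by ring; auto.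
    + assert (x^2+y^2 <> 0).
      { intro H0. apply H. assert (x = 0) by nra. assert (y = 0) by nra. subst. reflexivity. }
      field; replace (x*x+y*y) with (x^2+y^2) by ring; auto.
Qed.

Add Field Cfieldf : Cfield.


Lemma mvt_bound (f f' : R -> R) (x B : R) :
  (forall c, derivable_pt_lim f c (f' c)) ->
  (forall c, Rabs c <= Rabs x -> Rabs (f' c) <= B) ->
  Rabs (f x - f 0) <= B * Rabs x.
Proof.
  intros Hd Hb.
  destruct (Rtotal_order x 0) as [Hx|[Hx|Hx]].
  - destruct (MVT_cor2 f f' x 0 Hx (fun c _ => Hd c)) as [c [Hc1 Hc2]].
    assert (Rabs (f' c) <= B).
    { apply Hb. rewrite !Rabs_left1; lra. }
    replace (f x - f 0) with (- (f 0 - f x)) by ring. rewrite Rabs_Ropp, Hc1, Rabs_mult.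
    rewrite (Rabs_right (0 - x)) by lra. replace (Rabs x) with (0 - x) by (rewrite Rabs_left; lra).
    apply Rmult_le_compat_r; lra.
  - subst. rewrite Rminus_diag, !Rabs_R0. assert (0 <= B).
    { specialize (Hb 0). rewrite Rabs_R0 in Hb. pose proof (Rabs_pos (f' 0)). lra. }
    lra.
  - destruct (MVT_cor2 f f' 0 x Hx (fun c _ => Hd c)) as [c [Hc1 Hc2]].
    assert (Rabs (f' c) <= B).
    { apply Hb. rewrite !Rabs_right; lra. }
    rewrite Hc1, Rabs_mult. rewrite (Rabs_right (x - 0)) by lra. replace (Rabs x) with (x - 0) by (rewrite Rabs_right; lra).
    apply Rmult_le_compat_r; lra.
Qed.

Lemma Rabs_sin_le (x : R) : Rabs (sin x) <= Rabs x.
Proof.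
  pose proof (mvt_bound sin cos x 1 derivable_pt_lim_sin
    (fun c _ => Rabs_le _ _ (COS_bound c))) as H.
  rewrite sin_0, Rminus_0_r in H. lra.
Qed.

Lemma cos_1_le (x : R) : Rabs (cos x - 1) <= x ^ 2.
Proof.
  pose proof (mvt_bound cos (fun c => - sin c) x (Rabs x)) as H.
  rewrite cos_0 in H.
  replace (x^2) with (Rabs x * Rabs x).
  - apply H.
    + intro c. apply derivable_pt_lim_cos.
    + intros c Hc. rewrite Rabs_Ropp. eapply Rle_trans; [apply Rabs_sin_le|exact Hc].
  - rewrite <- Rabs_mult. rewrite Rabs_right; [ring|]. nra.
Qed.

Lemma exp_le_mono (x y : R) : x <= y -> exp x <= exp y.
Proof. intros [H|H]; [left; apply exp_increasing; auto | subst; lra]. Qed.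

Lemma Rcosh_le_exp (y : R) : Rabs (Rcosh y) <= exp (Rabs y).
Proof.
  unfold Rcosh. pose proof (exp_pos y). pose proof (exp_pos (-y)).
  rewrite Rabs_right by lra.
  destruct (Rle_dec 0 y).
  - rewrite Rabs_right by lra. assert (exp (-y) <= exp y) by (apply exp_le_mono; lra). lra.
  - rewrite Rabs_left by lra. assert (exp y <= exp (-y)) by (apply exp_le_mono; lra). lra.
Qed.

Lemma Rsinh_le_exp (y : R) : Rabs (Rsinh y) <= exp (Rabs y).
Proof.
  unfold Rsinh. pose proof (exp_pos y). pose proof (exp_pos (-y)).
  apply Rabs_le.
  destruct (Rle_dec 0 y).
  - rewrite Rabs_right by lra. assert (exp (-y) <= exp y) by (apply exp_le_mono; lra). lra.
  - rewrite Rabs_left by lra. assert (exp y <= exp (-y)) by (apply exp_le_mono; lra). lra.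
Qed.

Lemma der_sinh (c : R) : derivable_pt_lim Rsinh c (Rcosh c).
Proof. apply is_derive_Reals. unfold Rsinh, Rcosh. auto_derive; auto; lra. Qed.
Lemma der_cosh (c : R) : derivable_pt_lim Rcosh c (Rsinh c).
Proof. apply is_derive_Reals. unfold Rsinh, Rcosh. auto_derive; auto; lra. Qed.

Lemma Rsinh_0 : Rsinh 0 = 0.
Proof. unfold Rsinh. rewrite Ropp_0. lra. Qed.
Lemma Rcosh_0 : Rcosh 0 = 1.
Proof. unfold Rcosh. rewrite Ropp_0, exp_0. lra. Qed.

Lemma sinh_bound (x : R) : Rabs (Rsinh x) <= Rabs x * exp (Rabs x).
Proof.
  pose proof (mvt_bound Rsinh Rcosh x (exp (Rabs x)) der_sinh) as H.
  rewrite Rsinh_0, Rminus_0_r in H. rewrite Rmult_comm. apply H.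
  intros c Hc. eapply Rle_trans; [apply Rcosh_le_exp|]. apply exp_le_mono; auto.
Qed.

Lemma cosh_bound (x : R) : Rabs (Rcosh x - 1) <= x ^ 2 * exp (Rabs x).
Proof.
  pose proof (mvt_bound Rcosh Rsinh x (Rabs x * exp (Rabs x)) der_cosh) as H.
  rewrite Rcosh_0 in H.
  replace (x ^ 2 * exp (Rabs x)) with (Rabs x * exp (Rabs x) * Rabs x).
  - apply H. intros c Hc. eapply Rle_trans; [apply sinh_bound|].
    apply Rmult_le_compat; auto using Rabs_pos. left; apply exp_pos. apply exp_le_mono; auto.
  - replace (x^2) with (Rabs x * Rabs x). ring. rewrite <- Rabs_mult. rewrite Rabs_right; [ring|]. nra.
Qed.

Lemma RtoC_add x y : RtoC (x + y) = Cadd (RtoC x) (RtoC y).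
Proof. apply Ceq; simpl; ring. Qed.
Lemma RtoC_mul x y : RtoC (x * y) = Cmul (RtoC x) (RtoC y).
Proof. apply Ceq; simpl; ring. Qed.
Lemma RtoC_opp x : RtoC (- x) = Copp (RtoC x).
Proof. apply Ceq; simpl; ring. Qed.
Lemma RtoC_sub x y : RtoC (x - y) = Csub (RtoC x) (RtoC y).
Proof. apply Ceq; simpl; ring. Qed.
Lemma RtoC_inv x : x <> 0 -> RtoC (/ x) = Cinv (RtoC x).
Proof. intros H. apply Ceq; simpl; field; auto. Qed.
Lemma RtoC_div x y : y <> 0 -> RtoC (x / y) = Cdiv (RtoC x) (RtoC y).
Proof. intros H. unfold Rdiv, Cdiv. rewrite RtoC_mul, RtoC_inv; auto. Qed.
Lemma RtoC_inj x y : RtoC x = RtoC y -> x = y.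
Proof. intros H. injection H. auto. Qed.
Lemma RtoC_neq x y : x <> y -> RtoC x <> RtoC y.
Proof. intros H H'. apply H, RtoC_inj, H'. Qed.
Lemma RtoC_pow x n : RtoC (x ^ n) = Cpow (RtoC x) n.
Proof. induction n; simpl; auto. rewrite <- IHn, <- RtoC_mul. f_equal; ring. Qed.

Lemma Rcosh_add x y : Rcosh (x + y) = Rcosh x * Rcosh y + Rsinh x * Rsinh y.
Proof.
  unfold Rcosh, Rsinh. rewrite Ropp_plus_distr, !exp_plus.
  assert (exp x * exp (-x) = 1) by (rewrite <- exp_plus, Rplus_opp_r, exp_0; auto).
  assert (exp y * exp (-y) = 1) by (rewrite <- exp_plus, Rplus_opp_r, exp_0; auto).
  field.
Qed.
Lemma Rsinh_add x y : Rsinh (x + y) = Rsinh x * Rcosh y + Rcosh x * Rsinh y.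
Proof.
  unfold Rcosh, Rsinh. rewrite Ropp_plus_distr, !exp_plus. field.
Qed.
Lemma Rcosh_sinh x : Rcosh x ^ 2 - Rsinh x ^ 2 = 1.
Proof.
  unfold Rcosh, Rsinh.
  assert (exp x * exp (-x) = 1) by (rewrite <- exp_plus, Rplus_opp_r, exp_0; auto).
  nra.
Qed.
Lemma Rcosh_opp x : Rcosh (- x) = Rcosh x.
Proof. unfold Rcosh. rewrite Ropp_involutive. field. Qed.
Lemma Rsinh_opp x : Rsinh (- x) = - Rsinh x.
Proof. unfold Rsinh. rewrite Ropp_involutive. field. Qed.

Lemma Ccos_add A B : Ccos (Cadd A B) = Csub (Cmul (Ccos A) (Ccos B)) (Cmul (Csin A) (Csin B)).
Proof.
  destruct A as [x y], B as [x' y']. apply Ceq; simpl;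
  rewrite ?cos_plus, ?sin_plus, ?Rcosh_add, ?Rsinh_add; ring.
Qed.
Lemma Csin_add A B : Csin (Cadd A B) = Cadd (Cmul (Csin A) (Ccos B)) (Cmul (Ccos A) (Csin B)).
Proof.
  destruct A as [x y], B as [x' y']. apply Ceq; simpl;
  rewrite ?cos_plus, ?sin_plus, ?Rcosh_add, ?Rsinh_add; ring.
Qed.
Lemma Ccos_opp A : Ccos (Copp A) = Ccos A.
Proof. destruct A as [x y]. apply Ceq; simpl; rewrite ?cos_neg, ?sin_neg, ?Rcosh_opp, ?Rsinh_opp; ring. Qed.
Lemma Csin_opp A : Csin (Copp A) = Copp (Csin A).
Proof. destruct A as [x y]. apply Ceq; simpl; rewrite ?cos_neg, ?sin_neg, ?Rcosh_opp, ?Rsinh_opp; ring. Qed.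
Lemma Cpyth A : Cadd (Cmul (Csin A) (Csin A)) (Cmul (Ccos A) (Ccos A)) = RtoC 1.
Proof.
  destruct A as [x y]. pose proof (Rcosh_sinh y). pose proof (sin2_cos2 x). unfold Rsqr in *.
  apply Ceq; simpl; nra.
Qed.
Lemma Csin_RtoC x : Csin (RtoC x) = RtoC (sin x).
Proof. apply Ceq; simpl; rewrite ?Rcosh_0, ?Rsinh_0; ring. Qed.
Lemma Ccos_RtoC x : Ccos (RtoC x) = RtoC (cos x).
Proof. apply Ceq; simpl; rewrite ?Rcosh_0, ?Rsinh_0; ring. Qed.

Lemma Re_Cpartial f n : Re (Cpartial f n) = sum_f_R0 (fun k => Re (f k)) n.
Proof. induction n; simpl; auto. rewrite IHn; auto. Qed.
Lemma Im_Cpartial f n : Im (Cpartial f n) = sum_f_R0 (fun k => Im (f k)) n.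
Proof. induction n; simpl; auto. rewrite IHn; auto. Qed.
Lemma Cpartial_ext f g n : (forall k, (k <= n)%nat -> f k = g k) -> Cpartial f n = Cpartial g n.
Proof.
  induction n; intros H; simpl. apply H; lia.
  rewrite IHn, H; auto; intros; apply H; lia.
Qed.
Lemma Cpartial_lin c f g n :
  Cpartial (fun k => Cmul c (Csub (f k) (g k))) n = Cmul c (Csub (Cpartial f n) (Cpartial g n)).
Proof. induction n; simpl; auto. rewrite IHn. ring. Qed.

Lemma Csums_of_cv f L :
  Un_cv (fun n => Re (Cpartial f n)) (Re L) -> Un_cv (fun n => Im (Cpartial f n)) (Im L) -> Csums f L.
Proof.
  intros H1 H2 eps Heps.
  destruct (H1 (eps/2)) as [N1 HN1]; [lra|].
  destruct (H2 (eps/2)) as [N2 HN2]; [lra|].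
  exists (max N1 N2). intros n Hn.
  specialize (HN1 n ltac:(lia)). specialize (HN2 n ltac:(lia)).
  unfold R_dist in *. unfold Cnorm, Csub, Cadd, Copp; simpl.
  set (x := Re (Cpartial f n) + - Re L) in *. set (y := Im (Cpartial f n) + - Im L) in *.
  replace (Re (Cpartial f n) - Re L) with x in HN1 by (unfold x; ring).
  replace (Im (Cpartial f n) - Im L) with y in HN2 by (unfold y; ring).
  apply Rabs_def2 in HN1. apply Rabs_def2 in HN2.
  rewrite <- (sqrt_pow2 eps) by lra.
  apply sqrt_lt_1_alt. split; [nra|]. nra.
Qed.

Definition CDer (f : R -> Cplx) (t : R) (l : Cplx) :=
  derivable_pt_lim (fun s => Re (f s)) t (Re l) /\ derivable_pt_lim (fun s => Im (f s)) t (Im l).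

Lemma CDer_eq f t l l' : CDer f t l -> l = l' -> CDer f t l'.
Proof. intros H <-; auto. Qed.

Lemma CDer_add f g t l m : CDer f t l -> CDer g t m -> CDer (fun s => Cadd (f s) (g s)) t (Cadd l m).
Proof.
  intros [H1 H2] [H3 H4]; split; simpl.
  - exact (derivable_pt_lim_plus _ _ _ _ _ H1 H3).
  - exact (derivable_pt_lim_plus _ _ _ _ _ H2 H4).
Qed.
Lemma CDer_sub f g t l m : CDer f t l -> CDer g t m -> CDer (fun s => Csub (f s) (g s)) t (Csub l m).
Proof.
  intros [H1 H2] [H3 H4]; split; simpl.
  - exact (derivable_pt_lim_minus _ _ _ _ _ H1 H3).
  - exact (derivable_pt_lim_minus _ _ _ _ _ H2 H4).
Qed.
Lemma CDer_cmul c f t l : CDer f t l -> CDer (fun s => Cmul c (f s)) t (Cmul c l).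
Proof.
  intros [H1 H2]; destruct c as [cr ci]; split; simpl.
  - pose proof (derivable_pt_lim_minus _ _ _ _ _ (derivable_pt_lim_scal _ cr _ _ H1) (derivable_pt_lim_scal _ ci _ _ H2)) as H.
    exact H.
  - pose proof (derivable_pt_lim_plus _ _ _ _ _ (derivable_pt_lim_scal _ cr _ _ H2) (derivable_pt_lim_scal _ ci _ _ H1)) as H.
    exact H.
Qed.
Lemma CDer_RtoC g t l : derivable_pt_lim g t l -> CDer (fun s => RtoC (g s)) t (RtoC l).
Proof. intros H; split; simpl; auto. apply derivable_pt_lim_const. Qed.

Lemma CDer_Cpartial (F : nat -> R -> Cplx) (F' : nat -> Cplx) t n :
  (forall j, CDer (F j) t (F' j)) -> CDer (fun s => Cpartial (fun j => F j s) n) t (Cpartial F' n).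
Proof.
  intros H; induction n; simpl. apply H. apply CDer_add; auto.
Qed.

Lemma CDer_sin_lin w t : CDer (fun s => Csin (Cmul w (RtoC s))) t (Cmul w (Ccos (Cmul w (RtoC t)))).
Proof.
  destruct w as [p q]; split; simpl; apply is_derive_Reals; unfold Rcosh, Rsinh;
  auto_derive; auto; unfold Rminus; field.
Qed.

Lemma Cpartial_sub f g n : Cpartial (fun k => Csub (f k) (g k)) n = Csub (Cpartial f n) (Cpartial g n).
Proof. induction n; simpl; auto. rewrite IHn. ring. Qed.
Lemma Cpartial_cmul c f n : Cpartial (fun k => Cmul c (f k)) n = Cmul c (Cpartial f n).
Proof. induction n; simpl; auto. rewrite IHn. ring. Qed.
Lemma Cpartial_RtoC g n : Cpartial (fun k => RtoC (g k)) n = RtoC (sum_f_R0 g n).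
Proof. induction n; simpl; auto. rewrite IHn, RtoC_add. auto. Qed.

Definition uu (n : nat) : R := 2 * INR n + 1.
Definition dd (z : Cplx) (n : nat) : Cplx :=
  Cdiv (RtoC ((-1) ^ n * uu n)) (Csub (Cmul (RtoC (uu n)) (RtoC (uu n))) (Cmul z z)).

Lemma uu_INR n : INR (2 * n + 1) = uu n.
Proof. unfold uu. rewrite plus_INR, mult_INR. simpl. ring. Qed.
Lemma uu_pos n : 0 < uu n.
Proof. unfold uu. pose proof (pos_INR n). lra. Qed.

Lemma not_odd_sub z n : not_odd_int z -> Csub (RtoC (uu n)) z <> RtoC 0.
Proof.
  intros H E. destruct (H n) as [H1 _]. apply H1. rewrite uu_INR.
  apply Ceq; injection E; simpl; lra.
Qed.
Lemma not_odd_add z n : not_odd_int z -> Cadd (RtoC (uu n)) z <> RtoC 0.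
Proof.
  intros H E. destruct (H n) as [_ H1]. apply H1. rewrite uu_INR.
  apply Ceq; injection E; simpl; lra.
Qed.
Lemma Cmul_neq0 x y : x <> RtoC 0 -> y <> RtoC 0 -> Cmul x y <> RtoC 0.
Proof.
  intros Hx Hy E. apply Hy.
  replace y with (Cmul (Cinv x) (Cmul x y)) by (field; auto).
  rewrite E. ring.
Qed.
Lemma not_odd_den z n : not_odd_int z -> Csub (Cmul (RtoC (uu n)) (RtoC (uu n))) (Cmul z z) <> RtoC 0.
Proof.
  intros H. replace (Csub (Cmul (RtoC (uu n)) (RtoC (uu n))) (Cmul z z))
    with (Cmul (Csub (RtoC (uu n)) z) (Cadd (RtoC (uu n)) z)) by ring.
  apply Cmul_neq0; auto using not_odd_sub, not_odd_add.
Qed.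
Lemma RtoC_uu_neq0 n : RtoC (uu n) <> RtoC 0.
Proof. apply RtoC_neq. pose proof (uu_pos n); lra. Qed.
Lemma RtoC2_neq0 : RtoC 2 <> RtoC 0.
Proof. apply RtoC_neq. lra. Qed.
Lemma RtoC2 : RtoC 2 = Cadd (RtoC 1) (RtoC 1).
Proof. rewrite <- RtoC_add. f_equal. Qed.
Lemma C2_neq0 : Cadd (RtoC 1) (RtoC 1) <> RtoC 0.
Proof. rewrite <- RtoC2. apply RtoC2_neq0. Qed.

Definition GG (z : Cplx) (n : nat) (s : R) : Cplx :=
  Csub (Cmul (RtoC (1/2))
         (Cadd (Cmul (Cinv (Csub (RtoC (uu n)) z)) (Csin (Cmul (Csub (RtoC (uu n)) z) (RtoC s))))
               (Cmul (Cinv (Cadd (RtoC (uu n)) z)) (Csin (Cmul (Cadd (RtoC (uu n)) z) (RtoC s))))))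
       (RtoC (sin (uu n * s) / uu n)).

Lemma lin_sub_split u z t : Cmul (Csub (RtoC u) z) (RtoC t) = Cadd (RtoC (u * t)) (Copp (Cmul z (RtoC t))).
Proof. rewrite RtoC_mul. ring. Qed.
Lemma lin_add_split u z t : Cmul (Cadd (RtoC u) z) (RtoC t) = Cadd (RtoC (u * t)) (Cmul z (RtoC t)).
Proof. rewrite RtoC_mul. ring. Qed.

Lemma GG_der z n t : not_odd_int z ->
  CDer (GG z n) t (Cmul (Csub (Ccos (Cmul z (RtoC t))) (RtoC 1)) (RtoC (cos (uu n * t)))).
Proof.
  intros Hz. unfold GG.
  eapply CDer_eq.
  - apply CDer_sub.
    + apply CDer_cmul. apply CDer_add; apply CDer_cmul; apply CDer_sin_lin.
    + apply CDer_RtoC. apply is_derive_Reals.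
      pose proof (uu_pos n). auto_derive; auto.
  - pose proof (not_odd_sub z n Hz). pose proof (not_odd_add z n Hz).
    pose proof (uu_pos n).
    rewrite lin_sub_split, lin_add_split, !Ccos_add, Ccos_opp, Csin_opp, Ccos_RtoC, Csin_RtoC.
    replace (uu n * 1 * cos (uu n * t) * / uu n) with (cos (uu n * t)) by (field; lra).
    rewrite (RtoC_div 1 2), RtoC2 by lra. field. split; auto. split; auto. apply C2_neq0.
Qed.

Lemma sin_cos_uu n : sin (uu n * (PI / 2)) = (-1) ^ n /\ cos (uu n * (PI / 2)) = 0.
Proof.
  induction n.
  - unfold uu; simpl. replace ((2 * 0 + 1) * (PI / 2)) with (PI / 2) by ring.
    rewrite sin_PI2, cos_PI2. split; ring.
  - replace (uu (S n) * (PI / 2)) with (uu n * (PI / 2) + PI) by (unfold uu; rewrite S_INR; field).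
    rewrite neg_sin, neg_cos. destruct IHn as [-> ->]. simpl. split; ring.
Qed.

Lemma Cmul_RtoC0 w : Cmul w (RtoC 0) = RtoC 0.
Proof. ring. Qed.

Lemma GG_0 z n : GG z n 0 = RtoC 0.
Proof.
  unfold GG. rewrite !Cmul_RtoC0, Csin_RtoC, sin_0, Rmult_0_r, sin_0.
  unfold Rdiv. rewrite Rmult_0_l. ring.
Qed.

Lemma dd0 n : dd (RtoC 0) n = RtoC ((-1) ^ n / uu n).
Proof.
  unfold dd. pose proof (uu_pos n). rewrite RtoC_div by lra. rewrite RtoC_mul.
  field. apply RtoC_uu_neq0.
Qed.

Lemma GG_end z n : not_odd_int z ->
  GG z n (PI / 2) = Csub (Cmul (Ccos (Cmul z (RtoC (PI / 2)))) (dd z n)) (dd (RtoC 0) n).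
Proof.
  intros Hz. rewrite dd0. unfold GG, dd.
  pose proof (not_odd_sub z n Hz). pose proof (not_odd_add z n Hz). pose proof (uu_pos n).
  rewrite lin_sub_split, lin_add_split, !Csin_add, Ccos_opp, Csin_opp, Ccos_RtoC, Csin_RtoC.
  destruct (sin_cos_uu n) as [-> ->].
  rewrite !RtoC_div by lra. rewrite RtoC_mul, RtoC2.
  field. repeat split; auto using C2_neq0, RtoC_uu_neq0.
  replace (Csub (Cmul (RtoC (uu n)) (RtoC (uu n))) (Cmul z z))
    with (Cmul (Csub (RtoC (uu n)) z) (Cadd (RtoC (uu n)) z)) by ring.
  apply Cmul_neq0; auto.
Qed.

Definition Phi z m s := Cpartial (fun k => Cpartial (fun j => GG z j s) k) m.
Definition KK m t := sum_f_R0 (fun k => sum_f_R0 (fun j => cos (uu j * t)) k) m.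

Lemma Phi_der z m t : not_odd_int z ->
  CDer (Phi z m) t (Cmul (Csub (Ccos (Cmul z (RtoC t))) (RtoC 1)) (RtoC (KK m t))).
Proof.
  intros Hz. unfold Phi.
  eapply CDer_eq.
  - apply (CDer_Cpartial (fun k s => Cpartial (fun j => GG z j s) k)). intro k.
    apply (CDer_Cpartial (fun j s => GG z j s)). intro j. apply GG_der; auto.
  - simpl. unfold KK. rewrite <- Cpartial_RtoC, <- Cpartial_cmul.
    apply Cpartial_ext. intros k _.
    rewrite <- Cpartial_RtoC, <- Cpartial_cmul. reflexivity.
Qed.

Definition ee z k := Csub (Cmul (Ccos (Cmul z (RtoC (PI / 2)))) (Cpartial (dd z) k)) (Cpartial (dd (RtoC 0)) k).

Lemma Phi_ends z m : not_odd_int z ->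
  Csub (Phi z m (PI / 2)) (Phi z m 0) = Cpartial (ee z) m.
Proof.
  intros Hz. unfold Phi. rewrite <- Cpartial_sub. apply Cpartial_ext. intros k _.
  rewrite <- Cpartial_sub. unfold ee. rewrite <- Cpartial_cmul, <- Cpartial_sub.
  apply Cpartial_ext. intros j _. rewrite GG_end, GG_0 by auto. ring.
Qed.

Lemma KK_step1 t k : 2 * sin t * sum_f_R0 (fun j => cos (uu j * t)) k = sin (2 * (INR k + 1) * t).
Proof.
  induction k.
  - simpl. unfold uu. simpl. replace (2 * (0 + 1) * t) with (2 * t) by ring.
    replace ((2 * 0 + 1) * t) with t by ring. rewrite sin_2a. ring.
  - simpl sum_f_R0. rewrite Rmult_plus_distr_l, IHk. rewrite S_INR. unfold uu. rewrite S_INR.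
    set (A := (2 * (INR k + 1) + 1) * t).
    replace (2 * (INR k + 1) * t) with (A - t) by (unfold A; ring).
    replace (2 * (INR k + 1 + 1) * t) with (A + t) by (unfold A; ring).
    rewrite sin_plus, sin_minus. ring.
Qed.

Lemma KK_step2 t m : 2 * sin t * sum_f_R0 (fun k => sin (2 * (INR k + 1) * t)) m = cos t - cos ((2 * INR m + 3) * t).
Proof.
  induction m.
  - simpl. replace (2 * (0 + 1) * t) with (t + t) by ring.
    replace ((2 * 0 + 3) * t) with ((t + t) + t) by ring.
    rewrite cos_plus, sin_plus, cos_plus. assert (H2 : cos t * (sin t ^ 2 + cos t ^ 2) = cos t) by (pose proof (sin2_cos2 t) as H3; unfold Rsqr in H3; replace (sin t ^ 2 + cos t ^ 2) with 1 by (rewrite <- H3; ring); ring). ring_simplify. ring_simplify in H2. lra.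
  - rewrite tech5, Rmult_plus_distr_l, IHm. rewrite S_INR.
    set (B := 2 * (INR m + 1 + 1) * t).
    replace ((2 * INR m + 3) * t) with (B - t) by (unfold B; ring).
    replace ((2 * (INR m + 1) + 3) * t) with (B + t) by (unfold B; ring).
    rewrite cos_plus, cos_minus. ring.
Qed.

Lemma sum_scal_l (c : R) f n : sum_f_R0 (fun k => c * f k) n = c * sum_f_R0 f n.
Proof. induction n; simpl; auto. rewrite IHn. ring. Qed.

Lemma KK_bound m t : Rabs (sin t ^ 2 * KK m t) <= 1 / 2.
Proof.
  assert (E : 4 * (sin t ^ 2 * KK m t) = cos t - cos ((2 * INR m + 3) * t)).
  { rewrite <- KK_step2. unfold KK.
    replace (4 * (sin t ^ 2 * sum_f_R0 (fun k => sum_f_R0 (fun j => cos (uu j * t)) k) m))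
      with (2 * sin t * sum_f_R0 (fun k => 2 * sin t * sum_f_R0 (fun j => cos (uu j * t)) k) m).
    - f_equal. apply sum_eq. intros. apply KK_step1.
    - rewrite sum_scal_l. set (SS := sum_f_R0 (fun k : nat => sum_f_R0 (fun j : nat => cos (uu j * t)) k) m). change (sum_f_R0 (sum_f_R0 (fun j : nat => cos (uu j * t))) m) with SS. ring. }
  pose proof (COS_bound t). pose proof (COS_bound ((2 * INR m + 3) * t)).
  apply Rabs_le. lra.
Qed.

Lemma t_le_sin t : 0 <= t <= PI / 2 -> t ^ 2 <= 9 * sin t ^ 2.
Proof.
  intros [H1 H2]. pose proof PI_4. pose proof PI_RGT_0.
  destruct (SIN t H1 ltac:(lra)) as [Hs _].
  unfold sin_lb, sin_approx, sin_term in Hs. simpl in Hs.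
  assert (t - t^3/6 <= sin t).
  { eapply Rle_trans; [|exact Hs]. unfold INR, fact, Nat.mul, Nat.add. simpl.
    assert (t <= 2) by lra. assert (0 <= t^2 <= 4) by nra.
    field_simplify. assert (0 <= t^5 * (30240 - 720 * t^2)) by (apply Rmult_le_pos; [apply pow_le; lra | nra]). ring_simplify in H5. lra. }
  assert (t <= 2) by lra.
  assert (t / 3 <= sin t) by nra.
  nra.
Qed.

Definition Cz (z : Cplx) : R := (Re z ^ 2 + Im z ^ 2 + Rabs (Re z) * Rabs (Im z)) * exp (2 * Rabs (Im z)).

Lemma ccos_bound z t : Rabs t <= 2 ->
  Rabs (Re (Csub (Ccos (Cmul z (RtoC t))) (RtoC 1))) <= Cz z * t ^ 2 /\
  Rabs (Im (Csub (Ccos (Cmul z (RtoC t))) (RtoC 1))) <= Cz z * t ^ 2.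
Proof.
  intros Ht. destruct z as [p q]. unfold Cz, Csub, Cadd, Copp, Cmul, Ccos, RtoC. cbn [Re Im].
  replace (p * t - q * 0) with (p * t) by ring. replace (p * 0 + q * t) with (q * t) by ring.
  set (E := exp (2 * Rabs q)).
  assert (HE : exp (Rabs (q * t)) <= E).
  { apply exp_le_mono. rewrite Rabs_mult. pose proof (Rabs_pos q). nra. }
  assert (HE0 : 0 < exp (Rabs (q * t))) by apply exp_pos.
  pose proof (Rcosh_le_exp (q * t)) as Hch.
  pose proof (cosh_bound (q * t)) as Hc1.
  pose proof (sinh_bound (q * t)) as Hs1.
  pose proof (cos_1_le (p * t)) as Hc2.
  pose proof (Rabs_sin_le (p * t)) as Hs2.
  assert (Hpq : 0 <= Rabs p * Rabs q) by (apply Rmult_le_pos; apply Rabs_pos).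
  assert (Ht2 : 0 <= t ^ 2) by nra.
  rewrite Rabs_mult in Hs1, Hs2.
  split.
  - replace (cos (p * t) * Rcosh (q * t) + - (1)) with ((cos (p * t) - 1) * Rcosh (q * t) + (Rcosh (q * t) - 1)) by ring.
    eapply Rle_trans; [apply Rabs_triang|]. rewrite Rabs_mult.
    assert (Rabs (cos (p * t) - 1) * Rabs (Rcosh (q * t)) <= (p * t) ^ 2 * E).
    { apply Rmult_le_compat; auto using Rabs_pos; lra. }
    assert ((q * t) ^ 2 * exp (Rabs (q * t)) <= (q * t) ^ 2 * E).
    { apply Rmult_le_compat_l; [nra|lra]. }
    assert (0 <= E) by (unfold E; left; apply exp_pos).
    assert (0 <= Rabs p * Rabs q * E * t^2) by (apply Rmult_le_pos; [apply Rmult_le_pos|]; auto).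
    replace ((p ^ 2 + q ^ 2 + Rabs p * Rabs q) * E * t ^ 2) with
      ((p * t) ^ 2 * E + (q * t) ^ 2 * E + Rabs p * Rabs q * E * t^2) by ring.
    lra.
  - replace (- (sin (p * t) * Rsinh (q * t)) + - (0)) with (- (sin (p * t) * Rsinh (q * t))) by ring.
    rewrite Rabs_Ropp, Rabs_mult.
    assert (0 <= E) by (unfold E; left; apply exp_pos).
    assert (Rabs (sin (p * t)) * Rabs (Rsinh (q * t)) <= (Rabs p * Rabs t) * (Rabs q * Rabs t * E)).
    { apply Rmult_le_compat; [apply Rabs_pos|apply Rabs_pos|exact Hs2|].
      eapply Rle_trans; [exact Hs1|]. apply Rmult_le_compat_l; [apply Rmult_le_pos; apply Rabs_pos|].
      rewrite <- Rabs_mult; exact HE. }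
    assert (Rabs t * Rabs t = t ^ 2) by (rewrite <- Rabs_mult; rewrite Rabs_right; [ring|nra]).
    assert (0 <= (p ^ 2 + q ^ 2) * E * t^2) by (apply Rmult_le_pos; [apply Rmult_le_pos|]; nra).
    replace ((p ^ 2 + q ^ 2 + Rabs p * Rabs q) * E * t ^ 2) with
      ((p ^ 2 + q ^ 2) * E * t^2 + (Rabs p * Rabs t) * (Rabs q * Rabs t * E)).
    + lra.
    + replace ((Rabs p * Rabs t) * (Rabs q * Rabs t * E)) with (Rabs p * Rabs q * E * (Rabs t * Rabs t)) by ring.
      rewrite H1. ring.
Qed.

Lemma t_le_sin' t : Rabs t <= PI / 2 -> t ^ 2 <= 9 * sin t ^ 2.
Proof.
  intros H. destruct (Rle_dec 0 t).
  - apply t_le_sin. rewrite Rabs_right in H; lra.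
  - rewrite Rabs_left in H by lra. replace (t ^ 2) with ((- t) ^ 2) by ring.
    replace (sin t ^ 2) with (sin (- t) ^ 2) by (rewrite sin_neg; ring).
    apply t_le_sin. lra.
Qed.

Lemma Re_Cmul_RtoC w r : Re (Cmul w (RtoC r)) = Re w * r.
Proof. simpl. ring. Qed.
Lemma Im_Cmul_RtoC w r : Im (Cmul w (RtoC r)) = Im w * r.
Proof. simpl. ring. Qed.

Lemma der_bound z m c : Rabs c <= PI / 2 ->
  Rabs (Re (Cmul (Csub (Ccos (Cmul z (RtoC c))) (RtoC 1)) (RtoC (KK m c)))) <= 9 * Cz z / 2 /\
  Rabs (Im (Cmul (Csub (Ccos (Cmul z (RtoC c))) (RtoC 1)) (RtoC (KK m c)))) <= 9 * Cz z / 2.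
Proof.
  intros Hc. pose proof PI_4.
  destruct (ccos_bound z c ltac:(lra)) as [H1 H2].
  pose proof (t_le_sin' c Hc) as H3.
  pose proof (KK_bound m c) as H4. rewrite Rabs_mult in H4.
  assert (HC : 0 <= Cz z).
  { unfold Cz. apply Rmult_le_pos; [|left; apply exp_pos].
    pose proof (Rabs_pos (Re z)). pose proof (Rabs_pos (Im z)). nra. }
  set (w := Csub (Ccos (Cmul z (RtoC c))) (RtoC 1)) in *.
  assert (Hsq : Rabs (sin c ^ 2) = sin c ^ 2) by (apply Rabs_right; nra).
  rewrite Hsq in H4.
  pose proof (Rabs_pos (KK m c)).
  rewrite Re_Cmul_RtoC, Im_Cmul_RtoC.
  split.
  - rewrite Rabs_mult.
    apply Rle_trans with (Cz z * c ^ 2 * Rabs (KK m c)).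
    + apply Rmult_le_compat_r; auto.
    + apply Rle_trans with (Cz z * 9 * (sin c ^ 2 * Rabs (KK m c))).
      * replace (Cz z * 9 * (sin c ^ 2 * Rabs (KK m c))) with (Cz z * (9 * sin c ^ 2) * Rabs (KK m c)) by ring.
        apply Rmult_le_compat_r; auto. apply Rmult_le_compat_l; auto.
      * replace (9 * Cz z / 2) with (Cz z * 9 * (1/2)) by field.
        apply Rmult_le_compat_l; nra.
  - rewrite Rabs_mult.
    apply Rle_trans with (Cz z * c ^ 2 * Rabs (KK m c)).
    + apply Rmult_le_compat_r; auto.
    + apply Rle_trans with (Cz z * 9 * (sin c ^ 2 * Rabs (KK m c))).
      * replace (Cz z * 9 * (sin c ^ 2 * Rabs (KK m c))) with (Cz z * (9 * sin c ^ 2) * Rabs (KK m c)) by ring.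
        apply Rmult_le_compat_r; auto. apply Rmult_le_compat_l; auto.
      * replace (9 * Cz z / 2) with (Cz z * 9 * (1/2)) by field.
        apply Rmult_le_compat_l; nra.
Qed.

Lemma ee_bound z m : not_odd_int z ->
  Rabs (Re (Cpartial (ee z) m)) <= 9 * Cz z / 2 * (PI / 2) /\
  Rabs (Im (Cpartial (ee z) m)) <= 9 * Cz z / 2 * (PI / 2).
Proof.
  intros Hz. rewrite <- Phi_ends by auto. pose proof PI_RGT_0.
  assert (Hp : Rabs (PI / 2) = PI / 2) by (apply Rabs_right; lra).
  split.
  - pose proof (mvt_bound (fun s => Re (Phi z m s))
      (fun c => Re (Cmul (Csub (Ccos (Cmul z (RtoC c))) (RtoC 1)) (RtoC (KK m c)))) (PI / 2) (9 * Cz z / 2)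
      (fun c => proj1 (Phi_der z m c Hz))
      (fun c Hc => proj1 (der_bound z m c ltac:(rewrite Hp in Hc; exact Hc)))) as HH.
    cbv beta in HH. rewrite Hp in HH. exact HH.
  - pose proof (mvt_bound (fun s => Im (Phi z m s))
      (fun c => Im (Cmul (Csub (Ccos (Cmul z (RtoC c))) (RtoC 1)) (RtoC (KK m c)))) (PI / 2) (9 * Cz z / 2)
      (fun c => proj2 (Phi_der z m c Hz))
      (fun c Hc => proj2 (der_bound z m c ltac:(rewrite Hp in Hc; exact Hc)))) as HH.
    cbv beta in HH. rewrite Hp in HH. exact HH.
Qed.

Lemma frac_bound (x a b Dr Di s : R) :
  0 < s -> s <= Rabs Dr -> 0 <= a -> 0 <= b ->
  Rabs x <= a * Rabs Dr + b * Rabs Di ->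
  Rabs (x / (Dr * Dr + Di * Di)) <= (a + b) / s.
Proof.
  intros Hs HA Ha Hb Hx.
  set (A := Rabs Dr) in *. set (B := Rabs Di) in *.
  assert (HB : 0 <= B) by apply Rabs_pos.
  assert (HN : Dr * Dr + Di * Di = A * A + B * B).
  { unfold A, B. rewrite <- !Rabs_mult, !Rabs_right; try ring; nra. }
  rewrite HN. assert (0 < A * A + B * B) by nra.
  rewrite Rabs_div, (Rabs_right (A*A+B*B)) by lra.
  apply Rle_trans with ((a * A + b * B) / (A * A + B * B)).
  - apply Rmult_le_compat_r; [left; apply Rinv_0_lt_compat; lra | exact Hx].
  - apply (Rmult_le_reg_r (A * A + B * B)); [lra|].
    unfold Rdiv. rewrite Rmult_assoc, Rinv_l, Rmult_1_r by lra.
    apply (Rmult_le_reg_r s); [lra|].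
    replace ((a + b) * / s * (A * A + B * B) * s) with ((a + b) * (A * A + B * B)) by (field; lra).
    assert (H1 : A * s <= A * A + B * B) by nra.
    assert (H2 : B * s <= A * A + B * B).
    { assert (B * s <= B * A) by (apply Rmult_le_compat_l; lra). nra. }
    assert (a * A * s <= a * (A * A + B * B)) by (rewrite Rmult_assoc; apply Rmult_le_compat_l; lra).
    assert (b * B * s <= b * (A * A + B * B)) by (rewrite Rmult_assoc; apply Rmult_le_compat_l; lra).
    nra.
Qed.

Lemma exists_nat_gt (r : R) : exists N : nat, r < INR N.
Proof.
  destruct (archimed r) as [H1 _].
  destruct (Z_le_gt_dec 0 (up r)) as [H|H].
  - exists (Z.to_nat (up r)). rewrite INR_IZR_INZ, Z2Nat.id; auto.
  - exists 0%nat. simpl. apply Z.gt_lt in H. apply IZR_lt in H. lra.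
Qed.

Lemma telescope_ex : ex_series (fun n => / ((INR n + 1) * (INR n + 2))).
Proof.
  exists 1. apply is_series_Reals. intros eps Heps.
  destruct (exists_nat_gt (/ eps)) as [N HN].
  exists N. intros n Hn.
  assert (E : forall n, sum_f_R0 (fun n => / ((INR n + 1) * (INR n + 2))) n = 1 - / (INR n + 2)).
  { induction n0.
    - simpl. field.
    - rewrite tech5, IHn0, S_INR. pose proof (pos_INR n0). field. lra. }
  rewrite E. unfold Rdist. replace (1 - / (INR n + 2) - 1) with (- / (INR n + 2)) by ring.
  pose proof (pos_INR n). rewrite Rabs_Ropp, Rabs_right by (left; apply Rinv_0_lt_compat; lra).
  apply le_INR in Hn.
  assert (0 < / eps) by (apply Rinv_0_lt_compat; lra).
  apply Rlt_le_trans with (/ (/ eps)).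
  - apply Rinv_lt_contravar; nra.
  - rewrite Rinv_inv. lra.
Qed.

Lemma Cnz_norm D : D <> RtoC 0 -> Re D * Re D + Im D * Im D <> 0.
Proof.
  destruct D as [x y]; simpl; intros H E. apply H.
  assert (x = 0) by nra. assert (y = 0) by nra. subst. reflexivity.
Qed.
Lemma Re_div w D : D <> RtoC 0 ->
  Re (Cmul w (Cinv D)) = (Re w * Re D + Im w * Im D) / (Re D * Re D + Im D * Im D).
Proof. intros H. pose proof (Cnz_norm D H). destruct w as [wr wi], D as [dr di]; simpl in *. field. auto. Qed.
Lemma Im_div w D : D <> RtoC 0 ->
  Im (Cmul w (Cinv D)) = (Im w * Re D - Re w * Im D) / (Re D * Re D + Im D * Im D).
Proof. intros H. pose proof (Cnz_norm D H). destruct w as [wr wi], D as [dr di]; simpl in *. field. auto. Qed.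

Definition rr z n := Cmul (RtoC ((-1) ^ n / uu n))
  (Cmul (Cmul z z) (Cinv (Csub (Cmul (RtoC (uu n)) (RtoC (uu n))) (Cmul z z)))).

Lemma dd_split z n : not_odd_int z -> dd z n = Cadd (dd (RtoC 0) n) (rr z n).
Proof.
  intros Hz. rewrite dd0. unfold dd, rr. pose proof (not_odd_den z n Hz).
  pose proof (uu_pos n). rewrite !RtoC_div, RtoC_mul by lra.
  field. split; auto. apply RtoC_uu_neq0.
Qed.

Lemma Re_RtoC_Cmul r v : Re (Cmul (RtoC r) v) = r * Re v.
Proof. simpl. ring. Qed.
Lemma Im_RtoC_Cmul r v : Im (Cmul (RtoC r) v) = r * Im v.
Proof. simpl. ring. Qed.

Definition nw z := Rabs (Re (Cmul z z)) + Rabs (Im (Cmul z z)).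

Lemma rr_bound z n : not_odd_int z -> 2 * nw z <= uu n ->
  Rabs (Re (rr z n)) <= 2 * nw z / uu n ^ 3 /\ Rabs (Im (rr z n)) <= 2 * nw z / uu n ^ 3.
Proof.
  intros Hz Hn. pose proof (not_odd_den z n Hz) as HD. pose proof (uu_pos n) as Hu.
  unfold rr. set (w := Cmul z z) in *.
  set (D := Csub (Cmul (RtoC (uu n)) (RtoC (uu n))) w) in *.
  assert (HDr : Re D = uu n * uu n - Re w) by (unfold D; simpl; ring).
  assert (HDi : Im D = - Im w) by (unfold D; simpl; ring).
  assert (Hnw : 0 <= nw z) by (unfold nw; fold w; pose proof (Rabs_pos (Re w)); pose proof (Rabs_pos (Im w)); lra).
  assert (Hu1 : 1 <= uu n) by (unfold uu; pose proof (pos_INR n); lra).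
  assert (Hs : uu n * uu n / 2 <= Rabs (Re D)).
  { rewrite HDr. assert (Rabs (Re w) <= nw z) by (unfold nw; fold w; pose proof (Rabs_pos (Im w)); lra).
    assert (Re w <= nw z) by (pose proof (Rle_abs (Re w)); lra).
    rewrite Rabs_right; nra. }
  assert (Hs0 : 0 < uu n * uu n / 2) by nra.
  assert (HRe : Rabs (Re (Cmul w (Cinv D))) <= nw z / (uu n * uu n / 2)).
  { rewrite Re_div by auto. unfold nw; fold w. apply frac_bound; [exact Hs0 | exact Hs | apply Rabs_pos | apply Rabs_pos | ].
    eapply Rle_trans; [apply Rabs_triang|]. rewrite !Rabs_mult. lra. }
  assert (HIm : Rabs (Im (Cmul w (Cinv D))) <= nw z / (uu n * uu n / 2)).
  { rewrite Im_div by auto. unfold nw; fold w.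
    replace (Rabs (Re w) + Rabs (Im w)) with (Rabs (Im w) + Rabs (Re w)) by ring.
    apply frac_bound; [exact Hs0 | exact Hs | apply Rabs_pos | apply Rabs_pos | ].
    unfold Rminus. eapply Rle_trans; [apply Rabs_triang|]. rewrite Rabs_Ropp, !Rabs_mult. lra. }
  assert (Hr : Rabs ((-1) ^ n / uu n) = / uu n).
  { unfold Rdiv. rewrite Rabs_mult, pow_1_abs, Rmult_1_l. apply Rabs_right. left; apply Rinv_0_lt_compat; lra. }
  assert (E : 2 * nw z / uu n ^ 3 = / uu n * (nw z / (uu n * uu n / 2))) by (field; lra).
  rewrite E.
  assert (0 < / uu n) by (apply Rinv_0_lt_compat; lra).
  rewrite Re_RtoC_Cmul, Im_RtoC_Cmul.
  split.
  - rewrite Rabs_mult, Hr. apply Rmult_le_compat_l; lra.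
  - rewrite Rabs_mult, Hr. apply Rmult_le_compat_l; lra.
Qed.

Lemma rr_ex z : not_odd_int z -> ex_series (fun n => Re (rr z n)) /\ ex_series (fun n => Im (rr z n)).
Proof.
  intros Hz. destruct (exists_nat_gt (2 * nw z)) as [N HN].
  assert (Hnw : 0 <= nw z) by (unfold nw; pose proof (Rabs_pos (Re (Cmul z z))); pose proof (Rabs_pos (Im (Cmul z z))); lra).
  assert (Hb : ex_series (fun k => 4 * nw z * / ((INR k + 1) * (INR k + 2)))).
  { pose proof (ex_series_scal_l (4 * nw z) _ telescope_ex) as HH. exact HH. }
  assert (Hk : forall k, 2 * nw z / uu (N + k) ^ 3 <= 4 * nw z * / ((INR k + 1) * (INR k + 2))).
  { intro k. pose proof (pos_INR k). pose proof (pos_INR N).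
    assert (Hu : uu k <= uu (N + k)) by (unfold uu; rewrite plus_INR; lra).
    assert (Hu0 : 0 < uu k) by apply uu_pos.
    assert (H3 : (INR k + 1) * (INR k + 2) <= 2 * uu k ^ 3) by (unfold uu; nra).
    assert (H4 : uu k ^ 3 <= uu (N + k) ^ 3) by (apply pow_incr; lra).
    assert (HU : 0 < uu (N + k) ^ 3) by (apply pow_lt; lra).
    assert (HP : 0 < (INR k + 1) * (INR k + 2)) by nra.
    replace (2 * nw z / uu (N + k) ^ 3) with ((2 * nw z) * / uu (N + k) ^ 3) by reflexivity.
    replace (4 * nw z * / ((INR k + 1) * (INR k + 2))) with ((2 * nw z) * (2 / ((INR k + 1) * (INR k + 2)))) by (field; lra).
    apply Rmult_le_compat_l; [lra|].
    apply (Rmult_le_reg_r (uu (N + k) ^ 3)); [lra|].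
    rewrite Rinv_l by lra.
    apply (Rmult_le_reg_r ((INR k + 1) * (INR k + 2))); [lra|].
    replace (2 / ((INR k + 1) * (INR k + 2)) * uu (N + k) ^ 3 * ((INR k + 1) * (INR k + 2))) with (2 * uu (N + k) ^ 3) by (field; lra).
    lra. }
  assert (Hcond : forall k, 2 * nw z <= uu (N + k)).
  { intro k. unfold uu. rewrite plus_INR. pose proof (pos_INR k). pose proof (pos_INR N). lra. }
  split; apply (ex_series_incr_n _ N); refine (ex_series_le _ _ _ Hb); intro k;
  change (norm ?x) with (Rabs x).
  - eapply Rle_trans; [apply (rr_bound z (N + k) Hz (Hcond k))|apply Hk].
  - eapply Rle_trans; [apply (rr_bound z (N + k) Hz (Hcond k))|apply Hk].
Qed.

Lemma leibniz : Un_cv (fun n => sum_f_R0 (tg_alt PI_tg) n) (PI / 4).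
Proof.
  pose proof Alt_PI_eq as H. unfold Alt_PI in H. destruct exist_PI as [l Hl].
  replace (PI / 4) with l by lra. exact Hl.
Qed.

Lemma series_cv (a : nat -> R) : ex_series a -> Un_cv (fun n => sum_f_R0 a n) (Series a).
Proof. intros H. pose proof (Series_correct a H) as H1. apply is_series_Reals in H1. exact H1. Qed.

Lemma Re_dd0 k : Re (dd (RtoC 0) k) = tg_alt PI_tg k.
Proof. rewrite dd0. simpl. unfold tg_alt, PI_tg. rewrite uu_INR. reflexivity. Qed.
Lemma Im_dd0 k : Im (dd (RtoC 0) k) = 0.
Proof. rewrite dd0. reflexivity. Qed.

Lemma Re_Cadd a b : Re (Cadd a b) = Re a + Re b.
Proof. reflexivity. Qed.
Lemma Im_Cadd a b : Im (Cadd a b) = Im a + Im b.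
Proof. reflexivity. Qed.

Lemma dd_cv z : not_odd_int z ->
  Un_cv (fun n => Re (Cpartial (dd z) n)) (PI / 4 + Series (fun n => Re (rr z n))) /\
  Un_cv (fun n => Im (Cpartial (dd z) n)) (Series (fun n => Im (rr z n))).
Proof.
  intros Hz. destruct (rr_ex z Hz) as [H1 H2]. split.
  - eapply Un_cv_ext; [|apply (CV_plus _ _ _ _ leibniz (series_cv _ H1))].
    intro n. simpl. rewrite Re_Cpartial, <- sum_plus. apply sum_eq. intros k _.
    rewrite (dd_split z k Hz). rewrite Re_Cadd, Re_dd0. reflexivity.
  - eapply Un_cv_ext; [|apply (series_cv _ H2)].
    intro n. rewrite Im_Cpartial. apply sum_eq. intros k _.
    rewrite (dd_split z k Hz). rewrite Im_Cadd, Im_dd0. ring.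
Qed.

Lemma Rcosh_pos y : 0 < Rcosh y.
Proof. unfold Rcosh. pose proof (exp_pos y). pose proof (exp_pos (- y)). lra. Qed.

Lemma Rsinh_0_inv y : Rsinh y = 0 -> y = 0.
Proof.
  unfold Rsinh. intros H. assert (exp y = exp (- y)) by lra.
  apply exp_inv in H0. lra.
Qed.

Lemma cz_neq0 z : not_odd_int z -> Ccos (Cmul z (RtoC (PI / 2))) <> RtoC 0.
Proof.
  intros Hz E. destruct z as [p q].
  assert (E1 := f_equal Re E). assert (E2 := f_equal Im E). simpl in E1, E2.
  replace (p * (PI / 2) - q * 0) with (p * (PI / 2)) in * by ring.
  replace (p * 0 + q * (PI / 2)) with (q * (PI / 2)) in * by ring.
  pose proof (Rcosh_pos (q * (PI / 2))).
  assert (Hc : cos (p * (PI / 2)) = 0).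
  { apply Rmult_integral in E1 as [|]; auto. lra. }
  assert (Hs : sin (p * (PI / 2)) <> 0).
  { intro Hs. pose proof (sin2_cos2 (p * (PI / 2))). rewrite Hs, Hc in H0. unfold Rsqr in H0. lra. }
  assert (Hsh : Rsinh (q * (PI / 2)) = 0).
  { assert (sin (p * (PI / 2)) * Rsinh (q * (PI / 2)) = 0) by lra.
    apply Rmult_integral in H0 as [|]; auto. contradiction. }
  apply Rsinh_0_inv in Hsh. pose proof PI_RGT_0.
  assert (q = 0) by (apply Rmult_integral in Hsh as [|]; lra). subst q.
  apply cos_eq_0_0 in Hc as [k Hk].
  assert (Hp : p = 2 * IZR k + 1).
  { apply (Rmult_eq_reg_r (PI / 2)); [|lra]. rewrite Hk. field. }
  destruct (Z_le_gt_dec 0 k) as [Hk0|Hk0].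
  - destruct (Hz (Z.to_nat k)) as [H1 _]. apply H1. rewrite uu_INR. unfold uu.
    apply Ceq; cbn [Re Im RtoC]; auto.
    rewrite Hp. rewrite INR_IZR_INZ, Z2Nat.id by auto. ring.
  - destruct (Hz (Z.to_nat (- k - 1))) as [_ H1]. apply H1. rewrite uu_INR. unfold uu.
    apply Ceq; cbn [Re Im RtoC]; auto.
    rewrite Hp. rewrite INR_IZR_INZ, Z2Nat.id by lia.
    rewrite minus_IZR, opp_IZR. ring.
Qed.

Lemma bounded_div_cv (f : nat -> R) B : (forall m, Rabs (f m) <= B) -> Un_cv (fun n => f (pred n) / INR n) 0.
Proof.
  intros HB eps Heps.
  assert (HB0 : 0 <= B) by (specialize (HB 0%nat); pose proof (Rabs_pos (f 0%nat)); lra).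
  destruct (exists_nat_gt (B / eps)) as [N HN].
  exists (S N). intros n Hn. unfold Rdist. rewrite Rminus_0_r.
  assert (Hn' : INR (S N) <= INR n) by (apply le_INR; lia).
  rewrite S_INR in Hn'.
  assert (Hpos : 0 < INR n) by (pose proof (pos_INR N); lra).
  rewrite Rabs_div, (Rabs_right (INR n)) by lra.
  apply (Rmult_lt_reg_r (INR n)); [lra|].
  unfold Rdiv. rewrite Rmult_assoc, Rinv_l, Rmult_1_r by lra.
  apply Rle_lt_trans with B; auto.
  assert (B < eps * INR N + eps).
  { apply (Rmult_lt_compat_r eps) in HN; auto. unfold Rdiv in HN. rewrite Rmult_assoc, Rinv_l, Rmult_1_r in HN by lra. nra. }
  nra.
Qed.

Lemma cv_const c : Un_cv (fun _ : nat => c) c.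
Proof. intros eps Heps. exists 0%nat. intros. unfold Rdist. rewrite Rminus_diag, Rabs_R0. lra. Qed.

Theorem sec_sum z : not_odd_int z ->
  Csums (dd z) (Cdiv (RtoC (PI / 4)) (Ccos (Cmul z (RtoC (PI / 2))))).
Proof.
  intros Hz. destruct (dd_cv z Hz) as [Hr Hi].
  set (Lr := PI / 4 + Series (fun n => Re (rr z n))) in *.
  set (Li := Series (fun n => Im (rr z n))) in *.
  pose proof (cz_neq0 z Hz) as Hcz.
  set (cz := Ccos (Cmul z (RtoC (PI / 2)))) in *.
  assert (HS0r : Un_cv (fun n => Re (Cpartial (dd (RtoC 0)) n)) (PI / 4)).
  { eapply Un_cv_ext; [|exact leibniz]. intro n. rewrite Re_Cpartial. apply sum_eq. intros. rewrite Re_dd0. auto. }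
  assert (HS0i : forall n, Im (Cpartial (dd (RtoC 0)) n) = 0).
  { intro n. rewrite Im_Cpartial. induction n. { apply Im_dd0. } rewrite tech5, IHn, Im_dd0. ring. }
  assert (Her : Un_cv (fun k => Re (ee z k)) (Re cz * Lr - Im cz * Li - PI / 4)).
  { eapply Un_cv_ext; [|apply CV_minus; [apply CV_minus; apply CV_mult; [apply cv_const|exact Hr|apply cv_const|exact Hi]|exact HS0r]].
    intro k. unfold ee. simpl. ring. }
  assert (Hei : Un_cv (fun k => Im (ee z k)) (Re cz * Li + Im cz * Lr)).
  { eapply Un_cv_ext; [|apply CV_plus; apply CV_mult; [apply cv_const|exact Hi|apply cv_const|exact Hr]].
    intro k. unfold ee. simpl. rewrite HS0i. ring. }
  assert (Z1 : Re cz * Lr - Im cz * Li - PI / 4 = 0).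
  { apply (UL_sequence _ _ _ (Cesaro_1 _ _ Her)).
    apply (bounded_div_cv _ (9 * Cz z / 2 * (PI / 2))).
    intro m. rewrite <- Re_Cpartial. apply (ee_bound z m Hz). }
  assert (Z2 : Re cz * Li + Im cz * Lr = 0).
  { apply (UL_sequence _ _ _ (Cesaro_1 _ _ Hei)).
    apply (bounded_div_cv _ (9 * Cz z / 2 * (PI / 2))).
    intro m. rewrite <- Im_Cpartial. apply (ee_bound z m Hz). }
  assert (HL : Cmul cz (mkC Lr Li) = RtoC (PI / 4)).
  { apply Ceq; cbn [Re Im Cmul RtoC]; lra. }
  assert (HL' : Cdiv (RtoC (PI / 4)) cz = mkC Lr Li).
  { rewrite <- HL. field. auto. }
  rewrite HL'. apply Csums_of_cv; simpl; auto.
Qed.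

Lemma poch_S t n : poch t (S n) = Cmul (poch t n) (Cadd t (RtoC (INR n))).
Proof. reflexivity. Qed.

Lemma poch_shift t n : Cmul (poch t n) (Cadd t (RtoC (INR n))) = Cmul t (poch (Cadd (RtoC 1) t) n).
Proof.
  induction n.
  - simpl. apply Ceq; simpl; ring.
  - rewrite (poch_S (Cadd (RtoC 1) t)).
    replace (Cmul t (Cmul (poch (Cadd (RtoC 1) t) n) (Cadd (Cadd (RtoC 1) t) (RtoC (INR n)))))
      with (Cmul (Cmul t (poch (Cadd (RtoC 1) t) n)) (Cadd (Cadd (RtoC 1) t) (RtoC (INR n)))) by ring.
    rewrite <- IHn. rewrite poch_S. rewrite S_INR, RtoC_add. ring.
Qed.

Lemma poch_one n : poch (RtoC 1) n = RtoC (INR (fact n)).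
Proof.
  induction n.
  - reflexivity.
  - rewrite poch_S, IHn. rewrite fact_simpl, mult_INR, S_INR, RtoC_mul, RtoC_add. ring.
Qed.

Lemma poch_neq0 t n : (forall k, (k < n)%nat -> Cadd t (RtoC (INR k)) <> RtoC 0) -> poch t n <> RtoC 0.
Proof.
  induction n; intros H.
  - simpl. apply RtoC_neq. lra.
  - rewrite poch_S. apply Cmul_neq0. apply IHn. intros; apply H; lia. apply H; lia.
Qed.

Lemma Cpow_RtoC x n : Cpow (RtoC x) n = RtoC (x ^ n).
Proof. rewrite RtoC_pow. reflexivity. Qed.

Lemma Cinv_neq0 x : x <> RtoC 0 -> Cinv x <> RtoC 0.
Proof. intros H E. assert (Cmul x (Cinv x) = RtoC 1) by (field; auto). rewrite E in H0.
  assert (RtoC 0 = RtoC 1) by (rewrite <- H0; ring). apply RtoC_inj in H1. lra. Qed.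
Lemma Cdiv_neq0 x y : x <> RtoC 0 -> y <> RtoC 0 -> Cdiv x y <> RtoC 0.
Proof. intros. unfold Cdiv. apply Cmul_neq0; auto. apply Cinv_neq0; auto. Qed.

Lemma rel_solve P t N Q : Cadd t N <> RtoC 0 -> Cmul P (Cadd t N) = Cmul t Q -> P = Cdiv (Cmul t Q) (Cadd t N).
Proof. intros H E. rewrite <- E. field. auto. Qed.

Lemma sq_diff_neq0 U X : Csub U X <> RtoC 0 -> Cadd U X <> RtoC 0 -> Csub (Cmul U U) (Cmul X X) <> RtoC 0.
Proof. intros. replace (Csub (Cmul U U) (Cmul X X)) with (Cmul (Csub U X) (Cadd U X)) by ring. apply Cmul_neq0; auto. Qed.

Lemma alg_core (X Y N s Ph F P1 P2 P3 P4 Q1 Q2 Q3 Q4 t1 t2 t3 t4 : Cplx) :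
  let two := Cadd (RtoC 1) (RtoC 1) in
  let U := Cadd (Cmul two N) (RtoC 1) in
  t1 = Cdiv (Csub (RtoC 1) X) two -> t2 = Cdiv (Csub (RtoC 1) Y) two ->
  t3 = Cdiv (Cadd (RtoC 1) X) two -> t4 = Cdiv (Cadd (RtoC 1) Y) two ->
  Cmul P1 (Cadd t1 N) = Cmul t1 Q1 -> Cmul P2 (Cadd t2 N) = Cmul t2 Q2 ->
  Cmul P3 (Cadd t3 N) = Cmul t3 Q3 -> Cmul P4 (Cadd t4 N) = Cmul t4 Q4 ->
  Ph <> RtoC 0 -> F <> RtoC 0 ->
  Q1 <> RtoC 0 -> Q2 <> RtoC 0 -> Q3 <> RtoC 0 -> Q4 <> RtoC 0 ->
  Csub U X <> RtoC 0 -> Cadd U X <> RtoC 0 -> Csub U Y <> RtoC 0 -> Cadd U Y <> RtoC 0 ->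
  Csub (Cmul X X) (Cmul Y Y) <> RtoC 0 ->
  Cdiv (Cmul (Cmul F (Cmul (Cmul U Ph) (Cmul P1 (Cmul P2 (Cmul P3 (Cmul P4 (RtoC 1))))))) s)
       (Cmul (Cmul Ph (Cmul Q1 (Cmul Q2 (Cmul Q3 (Cmul Q4 (RtoC 1)))))) F)
  = Cmul (Cdiv (Cmul (Csub (RtoC 1) (Cmul X X)) (Csub (RtoC 1) (Cmul Y Y))) (Csub (Cmul X X) (Cmul Y Y)))
      (Csub (Cdiv (Cmul s U) (Csub (Cmul U U) (Cmul X X))) (Cdiv (Cmul s U) (Csub (Cmul U U) (Cmul Y Y)))).
Proof.
  intros two U E1 E2 E3 E4 R1 R2 R3 R4 HPh HF HQ1 HQ2 HQ3 HQ4 HUX1 HUX2 HUY1 HUY2 HXY.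
  pose proof C2_neq0 as H2. fold two in H2.
  assert (N1 : Cadd t1 N = Cdiv (Csub U X) two) by (rewrite E1; unfold U; field; auto).
  assert (N2 : Cadd t2 N = Cdiv (Csub U Y) two) by (rewrite E2; unfold U; field; auto).
  assert (N3 : Cadd t3 N = Cdiv (Cadd U X) two) by (rewrite E3; unfold U; field; auto).
  assert (N4 : Cadd t4 N = Cdiv (Cadd U Y) two) by (rewrite E4; unfold U; field; auto).
  rewrite (rel_solve _ _ _ _ ltac:(rewrite N1; apply Cdiv_neq0; auto) R1).
  rewrite (rel_solve _ _ _ _ ltac:(rewrite N2; apply Cdiv_neq0; auto) R2).
  rewrite (rel_solve _ _ _ _ ltac:(rewrite N3; apply Cdiv_neq0; auto) R3).
  rewrite (rel_solve _ _ _ _ ltac:(rewrite N4; apply Cdiv_neq0; auto) R4).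
  rewrite N1, N2, N3, N4, E1, E2, E3, E4.
  field. repeat split; auto; apply sq_diff_neq0; auto.
Qed.

Lemma Csub_eq0 x y : Csub x y = RtoC 0 -> x = y.
Proof. intros H. replace x with (Cadd (Csub x y) y) by ring. rewrite H. ring. Qed.

Lemma cos_sum_prod al ga :
  Cadd (Ccos (Cadd ga ga)) (Ccos (Cadd al al)) =
  Cmul (Cadd (RtoC 1) (RtoC 1)) (Cmul (Ccos (Cadd al ga)) (Ccos (Cadd al (Copp ga)))).
Proof.
  rewrite !Ccos_add, Ccos_opp, Csin_opp.
  pose proof (Cpyth al) as HA. pose proof (Cpyth ga) as HG.
  set (sa := Csin al) in *. set (ca := Ccos al) in *. set (sg := Csin ga) in *. set (cg := Ccos ga) in *.
  assert (HA0 : Csub (Cadd (Cmul sa sa) (Cmul ca ca)) (RtoC 1) = RtoC 0) by (rewrite HA; ring).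
  assert (HG0 : Csub (Cadd (Cmul sg sg) (Cmul cg cg)) (RtoC 1) = RtoC 0) by (rewrite HG; ring).
  apply Csub_eq0.
  set (A := Csub (Cadd (Cmul sa sa) (Cmul ca ca)) (RtoC 1)) in *.
  set (G := Csub (Cadd (Cmul sg sg) (Cmul cg cg)) (RtoC 1)) in *.
  transitivity (Cadd (Cmul G (Cadd (Csub (RtoC 1) (Cmul (Cadd (RtoC 1) (RtoC 1)) (Cmul ca ca))) (Cmul (Cadd (RtoC 1) (RtoC 1)) A)))
            (Cmul A (Csub (RtoC 1) (Cmul (Cadd (RtoC 1) (RtoC 1)) (Cmul cg cg))))).
  - unfold A, G. ring.
  - rewrite HA0, HG0. ring.
Qed.

Lemma sin_prod al ga :
  Cmul (Csin al) (Csin ga) =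
  Cdiv (Csub (Ccos (Cadd al (Copp ga))) (Ccos (Cadd al ga))) (Cadd (RtoC 1) (RtoC 1)).
Proof. rewrite !Ccos_add, Ccos_opp, Csin_opp. field. apply C2_neq0. Qed.

Lemma value_eq (a b c : Cplx) : a <> RtoC 0 -> b <> RtoC 0 -> c <> RtoC 0 ->
  not_odd_int (Cdiv (Cadd a c) b) -> not_odd_int (Cdiv (Csub a c) b) ->
  let X := Cdiv (Cadd a c) b in let Y := Cdiv (Csub a c) b in
  let piC := RtoC PI in
  let Q := Cmul (Cmul (Cmul (Csub (Csub b a) c) (Cadd (Cadd b a) c))
                      (Cadd (Csub b a) c)) (Csub (Cadd b a) c) in
  Cmul (Cdiv (Cmul (Csub (RtoC 1) (Cmul X X)) (Csub (RtoC 1) (Cmul Y Y))) (Csub (Cmul X X) (Cmul Y Y)))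
    (Csub (Cdiv (RtoC (PI / 4)) (Ccos (Cmul X (RtoC (PI / 2)))))
          (Cdiv (RtoC (PI / 4)) (Ccos (Cmul Y (RtoC (PI / 2)))))) =
    (Cmul (Cdiv (Cmul piC Q) (Cmul (Cmul (Cmul (RtoC 4) a) c) (Cpow b 2)))
          (Cdiv (Cmul (Csin (Cdiv (Cmul a piC) (Cmul (RtoC 2) b)))
                      (Csin (Cdiv (Cmul c piC) (Cmul (RtoC 2) b))))
                (Cadd (Ccos (Cdiv (Cmul c piC) b)) (Ccos (Cdiv (Cmul a piC) b))))).
Proof.
  intros Ha Hb Hc HX HY X Y piC Q.
  pose proof (cz_neq0 X HX) as HcX. pose proof (cz_neq0 Y HY) as HcY.
  assert (HXY : Csub (Cmul X X) (Cmul Y Y) <> RtoC 0).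
  { replace (Csub (Cmul X X) (Cmul Y Y)) with (Cdiv (Cmul (Cmul (Cadd (RtoC 1) (RtoC 1)) (Cadd (RtoC 1) (RtoC 1))) (Cmul a c)) (Cmul b b))
      by (unfold X, Y; field; auto).
    apply Cdiv_neq0; [|apply Cmul_neq0; auto]. apply Cmul_neq0; [apply Cmul_neq0; apply C2_neq0|apply Cmul_neq0; auto]. }
  rewrite (RtoC_div PI 2), (RtoC_div PI 4) in * by lra.
  replace (RtoC 4) with (Cmul (Cadd (RtoC 1) (RtoC 1)) (Cadd (RtoC 1) (RtoC 1))) in *
    by (rewrite <- RtoC2, <- RtoC_mul; f_equal; lra).
  rewrite !RtoC2 in *.
  pose proof C2_neq0 as H2.
  set (al := Cdiv (Cmul a piC) (Cmul (Cadd (RtoC 1) (RtoC 1)) b)).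
  set (ga := Cdiv (Cmul c piC) (Cmul (Cadd (RtoC 1) (RtoC 1)) b)).
  assert (EX : Cmul X (Cdiv (RtoC PI) (Cadd (RtoC 1) (RtoC 1))) = Cadd al ga).
  { unfold X, al, ga, piC. field. auto. }
  assert (EY : Cmul Y (Cdiv (RtoC PI) (Cadd (RtoC 1) (RtoC 1))) = Cadd al (Copp ga)).
  { unfold Y, al, ga, piC. field. auto. }
  assert (Ea : Cdiv (Cmul a piC) b = Cadd al al) by (unfold al; field; auto).
  assert (Ec : Cdiv (Cmul c piC) b = Cadd ga ga) by (unfold ga; field; auto).
  rewrite EX, EY in *. rewrite Ea, Ec, cos_sum_prod, sin_prod.
  set (cX := Ccos (Cadd al ga)) in *. set (cY := Ccos (Cadd al (Copp ga))) in *.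
  revert HXY. unfold X, Y, Q. intro HXY. simpl Cpow.
  unfold piC. field.
  repeat split; auto using C2_neq0. all: try (apply Cmul_neq0; auto using C2_neq0). { intro E; injection E; intros; lra. } { replace (Csub (Cmul (Cadd a c) (Cadd a c)) (Cmul (Csub a c) (Csub a c))) with (Cmul (Cmul (Cadd (RtoC 1) (RtoC 1)) (Cadd (RtoC 1) (RtoC 1))) (Cmul a c)) by ring. apply Cmul_neq0; apply Cmul_neq0; auto using C2_neq0. }
Qed.

Lemma cv_of_Csums f L : Csums f L ->
  Un_cv (fun n => Re (Cpartial f n)) (Re L) /\ Un_cv (fun n => Im (Cpartial f n)) (Im L).
Proof.
  intros H. split; intros eps Heps; destruct (H eps Heps) as [N HN]; exists N; intros n Hn;
  specialize (HN n Hn); unfold Cnorm, Csub, Cadd, Copp in HN; simpl in HN; unfold Rdist;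
  eapply Rle_lt_trans; try exact HN.
  - rewrite <- sqrt_Rsqr_abs. apply sqrt_le_1_alt. unfold Rsqr, Rminus. pose proof (Rle_0_sqr (Im (Cpartial f n) + - Im L)); unfold Rsqr in *; nra.
  - rewrite <- sqrt_Rsqr_abs. apply sqrt_le_1_alt. unfold Rsqr, Rminus. pose proof (Rle_0_sqr (Re (Cpartial f n) + - Re L)); unfold Rsqr in *; nra.
Qed.

Lemma Csums_ext f g L : (forall n, f n = g n) -> Csums g L -> Csums f L.
Proof.
  intros E H eps Heps. destruct (H eps Heps) as [N HN]. exists N. intros n Hn.
  rewrite (Cpartial_ext f g n) by auto. auto.
Qed.

Lemma Csums_lin k f g Lf Lg : Csums f Lf -> Csums g Lg ->
  Csums (fun n => Cmul k (Csub (f n) (g n))) (Cmul k (Csub Lf Lg)).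
Proof.
  intros Hf Hg. destruct (cv_of_Csums _ _ Hf) as [Hfr Hfi]. destruct (cv_of_Csums _ _ Hg) as [Hgr Hgi].
  apply Csums_of_cv.
  - eapply Un_cv_ext; [|apply CV_minus; apply CV_mult; [apply cv_const| apply (CV_minus _ _ _ _ Hfr Hgr)| apply cv_const| apply (CV_minus _ _ _ _ Hfi Hgi)]].
    intro n. rewrite Cpartial_lin. simpl. ring.
  - eapply Un_cv_ext; [|apply CV_plus; apply CV_mult; [apply cv_const| apply (CV_minus _ _ _ _ Hfi Hgi)| apply cv_const| apply (CV_minus _ _ _ _ Hfr Hgr)]].
    intro n. rewrite Cpartial_lin. simpl. ring.
Qed.

Lemma RtoC_uu n : RtoC (uu n) = Cadd (Cmul (Cadd (RtoC 1) (RtoC 1)) (RtoC (INR n))) (RtoC 1).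
Proof. unfold uu. rewrite RtoC_add, RtoC_mul, RtoC2. reflexivity. Qed.

Lemma RtoC_half : RtoC (1 / 2) = Cdiv (RtoC 1) (Cadd (RtoC 1) (RtoC 1)).
Proof. rewrite RtoC_div, RtoC2 by lra. reflexivity. Qed.

Lemma poch_three_half n :
  poch (RtoC (3 / 2)) n = Cmul (Cadd (Cmul (Cadd (RtoC 1) (RtoC 1)) (RtoC (INR n))) (RtoC 1)) (poch (RtoC (1 / 2)) n).
Proof.
  pose proof (poch_shift (RtoC (1 / 2)) n) as H.
  replace (Cadd (RtoC 1) (RtoC (1 / 2))) with (RtoC (3 / 2)) in H by (rewrite <- RtoC_add; f_equal; lra).
  assert (E : poch (RtoC (3 / 2)) n = Cmul (Cadd (RtoC 1) (RtoC 1)) (Cmul (RtoC (1 / 2)) (poch (RtoC (3 / 2)) n))).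
  { rewrite RtoC_half. field. apply C2_neq0. }
  rewrite E, <- H, RtoC_half. field. apply C2_neq0.
Qed.

Lemma nonpos_to_neq t k : not_nonpos_int t -> Cadd t (RtoC (INR k)) <> RtoC 0.
Proof.
  intros H E. apply (H k). rewrite RtoC_opp.
  replace t with (Csub (Cadd t (RtoC (INR k))) (RtoC (INR k))) by ring. rewrite E. ring.
Qed.

Lemma hyp_eq (a b c : Cplx) (n : nat) :
  a <> RtoC 0 -> b <> RtoC 0 -> c <> RtoC 0 ->
  not_odd_int (Cdiv (Cadd a c) b) -> not_odd_int (Cdiv (Csub a c) b) ->
  let half := RtoC (1 / 2) in
  let t1 := Csub half (Cdiv (Cadd a c) (Cmul (RtoC 2) b)) in
  let t2 := Csub half (Cdiv (Csub a c) (Cmul (RtoC 2) b)) in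
  let t3 := Cadd half (Cdiv (Cadd a c) (Cmul (RtoC 2) b)) in
  let t4 := Cadd half (Cdiv (Csub a c) (Cmul (RtoC 2) b)) in
  not_nonpos_int (Cadd (RtoC 1) t1) ->
  not_nonpos_int (Cadd (RtoC 1) t2) ->
  not_nonpos_int (Cadd (RtoC 1) t3) ->
  not_nonpos_int (Cadd (RtoC 1) t4) ->
  let X := Cdiv (Cadd a c) b in let Y := Cdiv (Csub a c) b in
  hyp_term (RtoC 1 :: RtoC (3 / 2) :: t1 :: t2 :: t3 :: t4 :: nil)
    (half :: Cadd (RtoC 1) t1 :: Cadd (RtoC 1) t2 :: Cadd (RtoC 1) t3 :: Cadd (RtoC 1) t4 :: nil)
    (RtoC (-1)) n =
  Cmul (Cdiv (Cmul (Csub (RtoC 1) (Cmul X X)) (Csub (RtoC 1) (Cmul Y Y))) (Csub (Cmul X X) (Cmul Y Y)))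
    (Csub (dd X n) (dd Y n)).
Proof.
  intros Ha Hb Hc HX HY half t1 t2 t3 t4 Hn1 Hn2 Hn3 Hn4 X Y.
  pose proof C2_neq0 as H2.
  assert (E1 : t1 = Cdiv (Csub (RtoC 1) X) (Cadd (RtoC 1) (RtoC 1)))
    by (unfold t1, half, X; rewrite RtoC_half, RtoC2; field; auto).
  assert (E2 : t2 = Cdiv (Csub (RtoC 1) Y) (Cadd (RtoC 1) (RtoC 1)))
    by (unfold t2, half, Y; rewrite RtoC_half, RtoC2; field; auto).
  assert (E3 : t3 = Cdiv (Cadd (RtoC 1) X) (Cadd (RtoC 1) (RtoC 1)))
    by (unfold t3, half, X; rewrite RtoC_half, RtoC2; field; auto).
  assert (E4 : t4 = Cdiv (Cadd (RtoC 1) Y) (Cadd (RtoC 1) (RtoC 1)))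
    by (unfold t4, half, Y; rewrite RtoC_half, RtoC2; field; auto).
  clearbody t1 t2 t3 t4.
  assert (HXY : Csub (Cmul X X) (Cmul Y Y) <> RtoC 0).
  { replace (Csub (Cmul X X) (Cmul Y Y)) with (Cdiv (Cmul (Cmul (Cadd (RtoC 1) (RtoC 1)) (Cadd (RtoC 1) (RtoC 1))) (Cmul a c)) (Cmul b b))
      by (unfold X, Y; field; auto).
    apply Cdiv_neq0; [|apply Cmul_neq0; auto]. apply Cmul_neq0; [apply Cmul_neq0; apply C2_neq0|apply Cmul_neq0; auto]. }
  fold X in HX. fold Y in HY. clearbody X Y.
  unfold hyp_term. cbn [map Cprod fold_right].
  unfold half. rewrite poch_one, poch_three_half, Cpow_RtoC.
  unfold dd. rewrite (RtoC_mul ((-1) ^ n) (uu n)), RtoC_uu.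
  apply (alg_core X Y (RtoC (INR n)) _ _ _ _ _ _ _ _ _ _ _ t1 t2 t3 t4); auto; try apply poch_shift.
  - apply poch_neq0. intros k _. rewrite <- RtoC_add. apply RtoC_neq. pose proof (pos_INR k). lra.
  - apply RtoC_neq. apply INR_fact_neq_0.
  - apply poch_neq0. intros k _. apply nonpos_to_neq; auto.
  - apply poch_neq0. intros k _. apply nonpos_to_neq; auto.
  - apply poch_neq0. intros k _. apply nonpos_to_neq; auto.
  - apply poch_neq0. intros k _. apply nonpos_to_neq; auto.
  - rewrite <- RtoC_uu. apply not_odd_sub; auto.
  - rewrite <- RtoC_uu. apply not_odd_add; auto.
  - rewrite <- RtoC_uu. apply not_odd_sub; auto.
  - rewrite <- RtoC_uu. apply not_odd_add; auto.
Qed.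
Theorem mainTheorem3 (a b c : Cplx)
  (ha : a <> RtoC 0) (hc : c <> RtoC 0)
  (hb : Re b > 0)
  (h1 : Re (Cadd (Cadd b a) c) > 0)
  (h2 : Re (Csub (Cadd b a) c) > 0)
  (h3 : Re (Cadd (Csub b a) c) > 0)
  (h4 : Re (Csub (Csub b a) c) > 0)
  (hodd1 : not_odd_int (Cdiv (Cadd a c) b))
  (hodd2 : not_odd_int (Cdiv (Csub a c) b)) :
  let half := RtoC (1 / 2) in
  let t1 := Csub half (Cdiv (Cadd a c) (Cmul (RtoC 2) b)) in
  let t2 := Csub half (Cdiv (Csub a c) (Cmul (RtoC 2) b)) in
  let t3 := Cadd half (Cdiv (Cadd a c) (Cmul (RtoC 2) b)) in
  let t4 := Cadd half (Cdiv (Csub a c) (Cmul (RtoC 2) b)) in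
  not_nonpos_int (Cadd (RtoC 1) t1) ->
  not_nonpos_int (Cadd (RtoC 1) t2) ->
  not_nonpos_int (Cadd (RtoC 1) t3) ->
  not_nonpos_int (Cadd (RtoC 1) t4) ->
  let Q := Cmul (Cmul (Cmul (Csub (Csub b a) c) (Cadd (Cadd b a) c))
                      (Cadd (Csub b a) c)) (Csub (Cadd b a) c) in
  let piC := RtoC PI in
  pFq_eq
    (RtoC 1 :: RtoC (3 / 2) :: t1 :: t2 :: t3 :: t4 :: nil)
    (half :: Cadd (RtoC 1) t1 :: Cadd (RtoC 1) t2 :: Cadd (RtoC 1) t3
          :: Cadd (RtoC 1) t4 :: nil)
    (RtoC (-1))
    (Cmul (Cdiv (Cmul piC Q) (Cmul (Cmul (Cmul (RtoC 4) a) c) (Cpow b 2)))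
          (Cdiv (Cmul (Csin (Cdiv (Cmul a piC) (Cmul (RtoC 2) b)))
                      (Csin (Cdiv (Cmul c piC) (Cmul (RtoC 2) b))))
                (Cadd (Ccos (Cdiv (Cmul c piC) b)) (Ccos (Cdiv (Cmul a piC) b))))).
Proof.
  intros half t1 t2 t3 t4 Hn1 Hn2 Hn3 Hn4 Q piC.
  assert (Hb0 : b <> RtoC 0) by (intro E; rewrite E in hb; simpl in hb; lra).
  unfold pFq_eq.
  pose proof (value_eq a b c ha Hb0 hc hodd1 hodd2) as HV. cbv zeta in HV.
  unfold Q, piC. rewrite <- HV.
  eapply Csums_ext.
  - intro n. exact (hyp_eq a b c n ha Hb0 hc hodd1 hodd2 Hn1 Hn2 Hn3 Hn4).
  - apply Csums_lin; apply sec_sum; auto.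
Qed.
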